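(* Let $F=(A,R)$ be an abstract argumentation framework, $S$ an initial set of $F$, and $(A',R')$ the strongly connected component of $F$ containing $S$. (1) If $S$ is unattacked then $|A'|=1$. (2) If $S$ is challenged or unchallenged then $|A'|>1$. (3) If $S$ is challenged and $S'$ is an initial set of $F$ with $S'\to S$, then the strongly connected component containing $S'$ equals the one containing $S$.
   Context: An abstract argumentation framework is a pair $F=(A,R)$ with $A$ finite and $R\subseteq A\times A$ ($a\to b$ means $(a,b)\in R$). $S^+=\{a\mid\exists b\in S:b\to a\}$, $S^-=\{a\mid\exists b\in S: a\to b\}$, and $S\to S'$ means $S^+\cap S'\neq\emptyset$. $S$ is admissible if conflict-free and every attacker of an element of $S$ is attacked by some element of $S$. An initial set is a non-empty admissible set with no non-empty admissible proper subset. An initial set $S$ is unattacked if $S^-=\emptyset$; unchallenged if $S^-\neq\emptyset$ and no initial set $S'$ has $S'\to S$; challenged if some initial set $S'$ has $S'\to S$. A strongly connected component of $F$ is a maximal $A'\subseteq A$ (with induced attacks) such that any two arguments in $A'$ are joined by a directed path within $A'$; every initial set is contained in a single strongly connected component. *)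

(* Defs.v *)
From mathcomp Require Import all_boot.
Set Implicit Arguments. Unset Strict Implicit. Unset Printing Implicit Defensive.

(* An argumentation framework: arguments form a finite type T, attack
   relation Ra : rel T  (Ra a b  means  a -> b). *)
Section AF.
Variables (T : finType) (Ra : rel T).

Definition splus (S : {set T}) : {set T} := [set a | [exists b in S, Ra b a]].
Definition sminus (S : {set T}) : {set T} := [set a | [exists b in S, Ra a b]].
Definition set_attacks (S S' : {set T}) : bool := splus S :&: S' != set0.

Definition conflict_free (S : {set T}) : bool :=
  [forall a in S, forall b in S, ~~ Ra a b].
Definition admissible (S : {set T}) : bool :=
  conflict_free S &&
  [forall a in S, forall b, Ra b a ==> [exists c in S, Ra c b]].
Definition initial (S : {set T}) : bool :=
  (S != set0) && admissible S &&
  [forall S' : {set T}, ((S' \proper S) && (S' != set0)) ==> ~~ admissible S'].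

Definition unattacked (S : {set T}) : bool := sminus S == set0.
Definition unchallenged (S : {set T}) : bool :=
  (sminus S != set0) &&
  [forall S' : {set T}, initial S' ==> ~~ set_attacks S' S].
Definition challenged (S : {set T}) : bool :=
  [exists S' : {set T}, initial S' && set_attacks S' S].

Definition induced (B : {set T}) : rel T :=
  fun u v => [&& Ra u v, u \in B & v \in B].
Definition strongly_connected (B : {set T}) : bool :=
  [forall x in B, forall y in B, connect (induced B) x y].
Definition is_scc (B : {set T}) : Prop :=
  strongly_connected B /\
  forall C : {set T}, B \proper C -> ~~ strongly_connected C.
End AF.

(* Main.v *)
Require Import Defs.
From mathcomp Require Import all_boot.
Set Implicit Arguments. Unset Strict Implicit.

Section H.
Variables (T : finType) (Ra : rel T).

Lemma conn_mono (B D : {set T}) u v : B \subset D ->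
  connect (induced Ra B) u v -> connect (induced Ra D) u v.
Proof.
move=> sBD; apply: connect_sub => x y /and3P [r xB yB].
by apply: connect1; rewrite /induced r !(subsetP sBD).
Qed.

Lemma sc_union (B C : {set T}) x1 y1 y2 x2 :
  strongly_connected Ra B -> strongly_connected Ra C ->
  x1 \in B -> y1 \in C -> y2 \in C -> x2 \in B ->
  connect (induced Ra (B :|: C)) x1 y1 -> connect (induced Ra (B :|: C)) y2 x2 ->
  strongly_connected Ra (B :|: C).
Proof.
move=> /forallP scB /forallP scC x1B y1C y2C x2B c1 c2.
have sB : B \subset B :|: C by apply: subsetUl.
have sC : C \subset B :|: C by apply: subsetUr.
have hB u v : u \in B -> v \in B -> connect (induced Ra (B :|: C)) u v.
  move=> uB vB; apply: (conn_mono sB).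
  by move: (scB u); rewrite uB /= => /forallP /(_ v); rewrite vB.
have hC u v : u \in C -> v \in C -> connect (induced Ra (B :|: C)) u v.
  move=> uB vB; apply: (conn_mono sC).
  by move: (scC u); rewrite uB /= => /forallP /(_ v); rewrite vB.
apply/forallP => u; apply/implyP => /setUP uBC; apply/forallP => v.
apply/implyP => /setUP vBC.
case: uBC => uX; case: vBC => vX.
- exact: hB.
- apply: (connect_trans (hB _ _ uX x1B)).
  exact: (connect_trans c1 (hC _ _ y1C vX)).
- apply: (connect_trans (hC _ _ uX y2C)).
  exact: (connect_trans c2 (hB _ _ x2B vX)).
- exact: hC.
Qed.

Lemma scc_max (A D : {set T}) : is_scc Ra A -> strongly_connected Ra D ->
  A \subset D -> D = A.
Proof.
move=> [_ mx] scD sAD; apply/eqP; rewrite eqEsubset sAD andbT.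
apply/negPn/negP => nDA.
have : A \proper D by rewrite properE sAD.
by move/mx; rewrite scD.
Qed.

Lemma edge_conn (B : {set T}) u v : Ra u v -> u \in B -> v \in B ->
  connect (induced Ra B) u v.
Proof. by move=> r uB vB; apply: connect1; rewrite /induced r uB vB. Qed.

Lemma sc1 (b : T) : strongly_connected Ra [set b].
Proof.
apply/forallP => u; apply/implyP; rewrite inE => /eqP ->.
apply/forallP => v; apply/implyP; rewrite inE => /eqP ->.
exact: connect0.
Qed.

End H.

Theorem proposition3 (T : finType) (Ra : rel T) (S A' : {set T}) :
  initial Ra S -> is_scc Ra A' -> S \subset A' ->
  [/\ (unattacked Ra S -> #|A'| = 1),
      (challenged Ra S \/ unchallenged Ra S -> 1 < #|A'|) &
      (forall S' B' : {set T}, initial Ra S' -> set_attacks Ra S' S ->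
         is_scc Ra B' -> S' \subset B' -> B' = A')].
Proof.
move=> iS sccA sSA.
move: (iS) => /andP [/andP [nS0 /andP [cfS defS]] _].
have noself a : a \in S -> ~~ Ra a a.
  by move=> aS; move/forallP: cfS => /(_ a); rewrite aS /= => /forallP /(_ a); rewrite aS.
have defend a b : a \in S -> Ra b a -> exists2 c, c \in S & Ra c b.
  move=> aS r; move/forallP: defS => /(_ a); rewrite aS /= => /forallP /(_ b).
  by rewrite r /= => /existsP [c /andP [cS rc]]; exists c.
have scA := sccA.1.
split.
- move=> /eqP unatt.
  case/set0Pn: nS0 => a aS.
  have aA : a \in A' by rewrite (subsetP sSA).
  suff -> : A' = [set a] by rewrite cards1.
  apply/eqP; rewrite eqEsubset sub1set aA andbT; apply/subsetP => y yA.
  rewrite inE; apply/negPn/negP => nya.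
  move/forallP: scA => /(_ y); rewrite yA /= => /forallP /(_ a); rewrite aA /=.
  case/connectP => p pth lst.
  case/lastP: p pth lst => [|q z] /=; first by move=> _ ay; rewrite ay eqxx in nya.
  rewrite rcons_path last_rcons => /andP [_ /and3P [r _ _]] az; subst z.
  have : last y q \in sminus Ra S by rewrite inE; apply/existsP; exists a; rewrite aS r.
  by rewrite unatt inE.
- move=> H.
  have [b bm] : exists b, b \in sminus Ra S.
    case: H => [/existsP [S' /andP [_ att]] | /andP [ne _]]; last by case/set0Pn: ne => b; exists b.
    case/set0Pn: att => y; rewrite !inE => /andP [/existsP [b /andP [_ r]] yS].
    by exists b; rewrite inE; apply/existsP; exists y; rewrite yS r.
  move: bm; rewrite inE => /existsP [a /andP [aS rba]].
  have aA : a \in A' by rewrite (subsetP sSA).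
  have [c cS rcb] := defend a b aS rba.
  have cA : c \in A' by rewrite (subsetP sSA).
  have scU : strongly_connected Ra (A' :|: [set b]).
    apply: (sc_union (x1 := c) (y1 := b) (y2 := b) (x2 := a)) => //; first exact: sc1.
    + by rewrite inE.
    + by rewrite inE.
    + by apply: edge_conn rcb _ _; rewrite !inE ?cA ?eqxx ?orbT.
    + by apply: edge_conn rba _ _; rewrite !inE ?aA ?eqxx ?orbT.
  have eU := scc_max sccA scU (subsetUl _ _).
  have bA : b \in A' by rewrite -eU !inE eqxx orbT.
  have nab : a != b by apply/eqP => e; subst b; move: (noself a aS); rewrite rba.
  have : [set a; b] \subset A' by rewrite subUset !sub1set aA bA.
  by move/subset_leq_card; rewrite cards2 nab.
- move=> S' B' iS' att sccB sSB.
  case/set0Pn: att => y; rewrite !inE => /andP [/existsP [x /andP [xS' rxy]] yS].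
  have [z zS rzx] := defend y x yS rxy.
  have xB : x \in B' by rewrite (subsetP sSB).
  have yA : y \in A' by rewrite (subsetP sSA).
  have zA : z \in A' by rewrite (subsetP sSA).
  have scU : strongly_connected Ra (B' :|: A').
    apply: (sc_union (x1 := x) (y1 := y) (y2 := z) (x2 := x)) => //; first exact: sccB.1.
    + by apply: edge_conn rxy _ _; rewrite inE ?xB ?yA ?orbT.
    + by apply: edge_conn rzx _ _; rewrite inE ?xB ?zA ?orbT.
  have e1 := scc_max sccB scU (subsetUl _ _).
  have e2 := scc_max sccA scU (subsetUr _ _).
  by rewrite -e1 e2.
Qed.
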